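(* Let $B$ be a finite set of closed, bounded line segments in $\mathbb{R}^2$ and let $R(B)=\{p\in\mathbb{R}^2: \text{every line through } p \text{ intersects } B\}$. If a maximal region of $R(B)$ is a line segment, then that line segment is contained in $B$ (i.e., in the union of the segments of $B$).
   Context: A region is a bounded, closed, connected subset of $\mathbb{R}^2$. For a set $P\subseteq\mathbb{R}^2$, a maximal region of $P$ is a region $R$ such that for every point $p\in R$ there is an open ball $A$ centered at $p$ with $A\cap R = A\cap P$. A line intersects $B$ if it meets at least one segment of $B$. *)

(* Defs.v *)
(* the plane is R * R for R : realType, with the
   product topology (= Euclidean topology). *)
From HB Require Import structures.
From mathcomp Require Import all_boot all_order all_algebra.
From mathcomp Require Import all_classical all_reals topology normedtype.
Set Implicit Arguments. Unset Strict Implicit. Unset Printing Implicit Defensive.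
Import Order.TTheory GRing.Theory Num.Theory numFieldNormedType.Exports.
Local Open Scope ring_scope.
Local Open Scope classical_set_scope.

Section Plane.
Variable R : realType.

Definition pt := (R * R)%type.

Definition segment (a b : pt) : set pt :=
  [set p | exists t : R, 0 <= t <= 1 /\
     p = ((1 - t) * a.1 + t * b.1, (1 - t) * a.2 + t * b.2)].

Definition unionB (B : seq (pt * pt)) : set pt :=
  [set p | exists2 s, s \in B & segment s.1 s.2 p].

Definition line_meets (p d : pt) (B : seq (pt * pt)) : Prop :=
  exists t : R, unionB B (p.1 + t * d.1, p.2 + t * d.2).

Definition RB (B : seq (pt * pt)) : set pt :=
  [set p | forall d : pt, d != (0, 0) -> line_meets p d B].

Definition eball (p : pt) (r : R) : set pt :=
  [set q | (q.1 - p.1) ^+ 2 + (q.2 - p.2) ^+ 2 < r ^+ 2].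

Definition bounded_pt (S : set pt) : Prop :=
  exists M : R, forall p, S p -> `|p.1| <= M /\ `|p.2| <= M.

Definition is_region (S : set pt) : Prop :=
  bounded_pt S /\ closed (S : set (R * R)%type) /\ connected (S : set (R * R)%type).

Definition maximal_region (P S : set pt) : Prop :=
  is_region S /\
  forall p, S p -> exists r : R, 0 < r /\ eball p r `&` S = eball p r `&` P.

End Plane.

(* Main.v *)
Require Import Defs.
From mathcomp Require Import all_boot all_order all_algebra.
From mathcomp Require Import all_classical all_reals topology normedtype.
From mathcomp Require Import ring lra.
Import Order.TTheory GRing.Theory Num.Theory numFieldNormedType.Exports.
Local Open Scope ring_scope.
Local Open Scope classical_set_scope.

Section Geo.
Variable R : realType.
Implicit Types (q d x : pt R) (B : seq (pt R * pt R)).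

Definition gl (d q x : pt R) : R := d.1 * (x.2 - q.2) - d.2 * (x.1 - q.1).

Lemma gl_shift d q q' x : gl d q x = gl d q' x + gl d q q'.
Proof. rewrite /gl; ring. Qed.

Lemma meets_hit q d B : line_meets q d B ->
  exists2 s, s \in B & gl d q s.1 * gl d q s.2 <= 0.
Proof.
case=> t [s sB [l [/andP[l0 l1] E]]]; exists s => //.
case: E => E1 E2.
have Z : (1 - l) * gl d q s.1 + l * gl d q s.2 = 0.
  have -> : (1 - l) * gl d q s.1 + l * gl d q s.2 =
    d.1 * ((1 - l) * s.1.2 + l * s.2.2 - q.2) - d.2 * ((1 - l) * s.1.1 + l * s.2.1 - q.1)
    by rewrite /gl; ring.
  rewrite -E1 -E2; ring.
set gc := gl d q s.1 in Z *; set ge := gl d q s.2 in Z *.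
have [le0|lp] := eqVneq l 0.
  by move: Z; rewrite le0 subr0 mul1r mul0r addr0 => ->; rewrite mul0r.
have lp' : 0 < l by rewrite lt_neqAle eq_sym lp l0.
have : l * (gc * ge) = - ((1 - l) * (gc * gc)).
  have lg : l * ge = - ((1 - l) * gc).
    by apply/eqP; rewrite -subr_eq0 opprK addrC Z.
  transitivity (gc * (l * ge)); first ring.
  rewrite lg; ring.
move=> h; rewrite -(pmulr_rle0 _ lp') h oppr_le0.
apply: mulr_ge0; first by rewrite subr_ge0.
rewrite -expr2; exact: sqr_ge0.
Qed.

Lemma dir_nz (d : pt R) : d != (0, 0) -> d.1 * d.1 + d.2 * d.2 != 0.
Proof.
case: d => d1 d2 /= hd; apply/negP; rewrite -!expr2 paddr_eq0 ?sqr_ge0 //.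
rewrite !sqrf_eq0 => /andP[/eqP h1 /eqP h2]; move: hd; by rewrite h1 h2 eqxx.
Qed.

Lemma line_pt q d x : d != (0, 0) -> gl d q x = 0 ->
  exists t, x = (q.1 + t * d.1, q.2 + t * d.2).
Proof.
move=> dn g0; have D := dir_nz _ dn.
set D0 := d.1 * d.1 + d.2 * d.2 in D.
exists (((x.1 - q.1) * d.1 + (x.2 - q.2) * d.2) / D0).
have k1 : (x.1 - q.1) * D0 = ((x.1 - q.1) * d.1 + (x.2 - q.2) * d.2) * d.1.
  have : (x.1 - q.1) * D0 - ((x.1 - q.1) * d.1 + (x.2 - q.2) * d.2) * d.1 = - d.2 * gl d q x
    by rewrite /D0 /gl; ring.
  by rewrite g0 mulr0 => /eqP; rewrite subr_eq0 => /eqP.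
have k2 : (x.2 - q.2) * D0 = ((x.1 - q.1) * d.1 + (x.2 - q.2) * d.2) * d.2.
  have : (x.2 - q.2) * D0 - ((x.1 - q.1) * d.1 + (x.2 - q.2) * d.2) * d.2 = d.1 * gl d q x
    by rewrite /D0 /gl; ring.
  by rewrite g0 mulr0 => /eqP; rewrite subr_eq0 => /eqP.
case: x g0 k1 k2 => x1 x2 /= _ k1 k2.
by congr (_, _); rewrite mulrAC -?k1 -?k2 mulfK // addrC subrK.
Qed.

Lemma hit_meets q d B s : d != (0, 0) -> s \in B ->
  gl d q s.1 * gl d q s.2 <= 0 -> line_meets q d B.
Proof.
move=> dn sB.
set gc := gl d q s.1; set ge := gl d q s.2 => hp.
have [l [/andP[l0 l1] Hl]] : exists l, 0 <= l <= 1 /\ (1 - l) * gc + l * ge = 0.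
  have [eq|ne] := eqVneq gc ge.
    exists 0; rewrite lexx ler01; split => //.
    have : gc * gc <= 0 by rewrite {2}eq.
    rewrite -expr2 => h; have : gc ^+ 2 = 0 by apply/eqP; rewrite eq_le h sqr_ge0.
    by move/eqP; rewrite sqrf_eq0 => /eqP ->; rewrite mulr0 mul0r addr0.
  have Dn : gc - ge != 0 by rewrite subr_eq0.
  exists (gc / (gc - ge)); split; last first.
    by apply/eqP; rewrite -subr_eq0; apply/eqP; field.
  have [Dp|Dm] := ltP 0 (gc - ge).
    have gc0 : 0 <= gc by nra.
    apply/andP; split; first exact: divr_ge0 gc0 (ltW Dp).
    rewrite ler_pdivrMr // mul1r; nra.
  have Dm' : gc - ge < 0 by rewrite lt_neqAle Dn Dm.
  have gc0 : gc <= 0 by nra.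
  rewrite -(divrNN gc); apply/andP; split.
    by apply: divr_ge0; rewrite oppr_ge0 // ltW.
  rewrite ler_pdivrMr ?oppr_gt0 // mul1r; nra.
set x := ((1 - l) * s.1.1 + l * s.2.1, (1 - l) * s.1.2 + l * s.2.2).
have gx : gl d q x = 0 by rewrite -Hl /gl /x /gc /ge /gl /=; ring.
have [t xE] := line_pt _ _ _ dn gx.
by exists t, s => //; exists l; split; [rewrite l0 l1 | rewrite -xE].
Qed.


Lemma fin_bounds (f g : pt R -> R) B : exists K m, [/\ 0 <= K, 0 < m &
  forall s, s \in B -> [/\ `|f s.1| <= K, `|f s.2| <= K,
     (g s.1 = 0 \/ m <= `|g s.1|) & (g s.2 = 0 \/ m <= `|g s.2|)]].
Proof.
elim: B => [|s B [K [m [K0 m0 H]]]].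
  by exists 0, 1; split => // s; rewrite in_nil.
set m1 := if g s.1 == 0 then 1 else `|g s.1|.
set m2 := if g s.2 == 0 then 1 else `|g s.2|.
have m1p : 0 < m1 by rewrite /m1; case: eqVneq => // h; rewrite normr_gt0.
have m2p : 0 < m2 by rewrite /m2; case: eqVneq => // h; rewrite normr_gt0.
exists (Num.max K (Num.max `|f s.1| `|f s.2|)), (Num.min m (Num.min m1 m2)).
split.
- by rewrite le_max K0.
- by rewrite !lt_min m0 m1p m2p.
move=> s'; rewrite in_cons => /orP[/eqP->|/H[h1 h2 h3 h4]].
  split.
  + by rewrite !le_max lexx orbT.
  + by rewrite !le_max lexx !orbT.
  + have [g0|gn] := eqVneq (g s.1) 0; [by left|right].
    by rewrite !ge_min /m1 (negbTE gn) lexx orbT.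
  + have [g0|gn] := eqVneq (g s.2) 0; [by left|right].
    by rewrite !ge_min /m2 (negbTE gn) lexx !orbT.
split.
- by rewrite le_max h1.
- by rewrite le_max h2.
- case: h3 => h3; [by left|right]; by rewrite ge_min h3.
- case: h4 => h4; [by left|right]; by rewrite ge_min h4.
Qed.

Lemma lam_ex (gc ge : R) : gc * ge <= 0 ->
  exists l, 0 <= l <= 1 /\ (1 - l) * gc + l * ge = 0.
Proof.
move=> hp.
have [eq|ne] := eqVneq gc ge.
  exists 0; rewrite lexx ler01; split => //.
  have : gc * gc <= 0 by rewrite {2}eq.
  rewrite -expr2 => h; have : gc ^+ 2 = 0 by apply/eqP; rewrite eq_le h sqr_ge0.
  by move/eqP; rewrite sqrf_eq0 => /eqP ->; rewrite mulr0 mul0r addr0.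
have Dn : gc - ge != 0 by rewrite subr_eq0.
exists (gc / (gc - ge)); split; last first.
  by apply/eqP; rewrite -subr_eq0; apply/eqP; field.
have [Dp|Dm] := ltP 0 (gc - ge).
  have gc0 : 0 <= gc by nra.
  apply/andP; split; first exact: divr_ge0 gc0 (ltW Dp).
  rewrite ler_pdivrMr // mul1r; nra.
have Dm' : gc - ge < 0 by rewrite lt_neqAle Dn Dm.
have gc0 : gc <= 0 by nra.
rewrite -(divrNN gc); apply/andP; split.
  by apply: divr_ge0; rewrite oppr_ge0 // ltW.
rewrite ler_pdivrMr ?oppr_gt0 // mul1r; nra.
Qed.

Lemma between (c e p : pt R) (v1 v2 A E : R) :
  c = (p.1 + A * v1, p.2 + A * v2) -> e = (p.1 + E * v1, p.2 + E * v2) ->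
  A * E <= 0 -> segment c e p.
Proof.
move=> -> -> /lam_ex [l [l01 Hl]]; exists l; split => //=.
case: p => p1 p2 /=; congr (_, _).
  have : (1 - l) * (p1 + A * v1) + l * (p1 + E * v1) = p1 + ((1 - l) * A + l * E) * v1 by ring.
  by rewrite Hl mul0r addr0.
have : (1 - l) * (p2 + A * v2) + l * (p2 + E * v2) = p2 + ((1 - l) * A + l * E) * v2 by ring.
by rewrite Hl mul0r addr0.
Qed.

Lemma fc (c1 c2 e1 e2 : R) : continuous (fun l : R => ((1 - l) * c1 + l * e1, (1 - l) * c2 + l * e2)).
Proof. move=> x.
have h : forall c e : R, (fun l : R => (1 - l) * c + l * e) @ x --> ((1 - x) * c + x * e).
  move=> c e; apply: cvgD; [apply: cvgM; [apply: cvgB; [exact: cvg_cst|exact: cvg_id]|exact: cvg_cst]|apply: cvgM; [exact: cvg_id|exact: cvg_cst]].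
exact: (cvg_pair (h c1 e1) (h c2 e2)).
Qed.

Lemma seg_closed (a b : pt R) : closed (segment a b).
Proof.
have -> : segment a b = (fun l : R => ((1 - l) * a.1 + l * b.1, (1 - l) * a.2 + l * b.2)) @` `[0, 1].
  apply/seteqP; split => x.
  - move=> [t [/andP[t0 t1] ->]]. exists t => //. by rewrite /= in_itv /= t0 t1.
  - move=> [t]; rewrite /= in_itv /= => /andP[t0 t1] <-. by exists t; rewrite t0 t1.
apply: compact_closed; first exact: norm_hausdorff.
apply: continuous_compact; last exact: segment_compact.
apply: continuous_subspaceT => x; exact: fc.
Qed.

Lemma unionB_closed B : closed (unionB B).
Proof.
have -> : unionB B = \big[setU/set0]_(s <- B) segment s.1 s.2.
  elim: B => [|s B IH].
    by rewrite big_nil; apply/seteqP; split => x //; case=> s; rewrite in_nil.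
  rewrite big_cons -IH; apply/seteqP; split => x.
    by case=> s'; rewrite in_cons => /orP[/eqP->|h]; [left|right; exists s'].
  by case => [h|[s' h1 h2]]; [exists s; rewrite ?mem_head|exists s'; rewrite ?in_cons ?h1 ?orbT].
by apply: closed_bigsetU => s _; exact: seg_closed.
Qed.

Lemma closed_lim (E : set (pt R)) (x v : pt R) : closed E ->
  (forall t, 0 < t < 1 -> E (x.1 + t * v.1, x.2 + t * v.2)) -> E x.
Proof.
move=> /closure_id cE H; rewrite cE => A /nbhs_ballP [e e0 Hb].
set k := `|v.1| + `|v.2| + 1.
have k0 : 0 < k by rewrite /k ltr_wpDl ?addr_ge0.
set t := Num.min (1 / 2) (e / k).
have t0 : 0 < t by rewrite lt_min divr_gt0 //= divr_gt0.
have t1 : t < 1 by rewrite gt_min ltr_pdivrMr // mul1r ltr1n.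
have tk : t * k <= e by rewrite -ler_pdivlMr // ge_min lexx orbT.
exists (x.1 + t * v.1, x.2 + t * v.2); split; first by apply: H; rewrite t0 t1.
have hb := Hb (x.1 + t * v.1, x.2 + t * v.2); rewrite /ball /= in hb.
apply: hb; split => /=; rewrite /ball /=; rewrite opprD addrA subrr add0r normrN normrM (gtr0_norm t0).
  apply: lt_le_trans tk; rewrite ltr_pM2l // /k; have := normr_ge0 v.2; lra.
apply: lt_le_trans tk; rewrite ltr_pM2l // /k; have := normr_ge0 v.1; lra.
Qed.



Lemma sgnG {m b x : R} : (b = 0 \/ m <= `|b|) -> `|x| < m -> b != 0 -> 0 < b * (b - x).
Proof.
move=> [->|hb]; first by rewrite eqxx.
move=> hx _; move: hx; rewrite ltr_norml => /andP[h1 h2].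
have [bp|bn] := ltP 0 b.
  rewrite gtr0_norm // in hb; nra.
rewrite ler0_norm // in hb; nra.
Qed.

Lemma sq_pos (a : R) : a != 0 -> 0 < a * a.
Proof. by rewrite neq_lt => /orP[h|h]; nra. Qed.

Lemma final_contra (a1 a2 ep gp em gm : R) : 0 < gp -> gm < 0 ->
  a1 * (ep * a1 + gp) < 0 -> 0 < a2 * (ep * a2 + gp) ->
  a1 * (em * a1 + gm) < 0 -> 0 < a2 * (em * a2 + gm) -> False.
Proof.
move=> gp0 gm0 h1 h2 h3 h4.
have a1n : a1 != 0 by apply/eqP => e; rewrite e mul0r ltxx in h1.
have a2n : a2 != 0 by apply/eqP => e; rewrite e mul0r ltxx in h2.
have s1 : 0 < a1 * a1 := sq_pos _ a1n.
have s2 : 0 < a2 * a2 := sq_pos _ a2n.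
have k1 : gp * (a1 * a2 * (a2 - a1)) < 0.
  have e1 : (a1 * (ep * a1 + gp)) * (a2 * a2) < (a2 * (ep * a2 + gp)) * (a1 * a1).
    apply: (@lt_trans _ _ 0); first by rewrite pmulr_llt0.
    by rewrite mulr_gt0.
  nra.
have k2 : gm * (a1 * a2 * (a2 - a1)) < 0.
  have e1 : (a1 * (em * a1 + gm)) * (a2 * a2) < (a2 * (em * a2 + gm)) * (a1 * a1).
    apply: (@lt_trans _ _ 0); first by rewrite pmulr_llt0.
    by rewrite mulr_gt0.
  nra.
nra.
Qed.

Lemma H1 {b w z : R} : 0 < b * w -> 0 <= z * w -> 0 <= z * b.
Proof. have [wp|wn|->] := ltgtP w 0; nra. Qed.
Lemma H2 {b w z : R} : 0 < b * w -> 0 < z * w -> 0 < z * b.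
Proof. have [wp|wn|->] := ltgtP w 0; nra. Qed.

Lemma seg_class (K m e0 s0 e1 g1 e2 g2 ac bc ae be : R) :
  0 < e0 -> e0 * K < m -> (s0 = 1 \/ s0 = -1) ->
  `|ac| <= K -> `|ae| <= K ->
  (bc = 0 \/ m <= `|bc|) -> (be = 0 \/ m <= `|be|) ->
  (bc = 0 -> ac != 0) -> (be = 0 -> ae != 0) ->
  ~ (bc = 0 /\ be = 0 /\ ac * ae <= 0) ->
  `|e1 * ac + g1| < m -> `|e1 * ae + g1| < m ->
  `|e2 * ac + g2| < m -> `|e2 * ae + g2| < m ->
  (bc - s0 * e0 * ac) * (be - s0 * e0 * ae) <= 0 ->
  0 < (bc - (e1 * ac + g1)) * (be - (e1 * ae + g1)) ->
  0 < (bc - (e2 * ac + g2)) * (be - (e2 * ae + g2)) ->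
  exists a0 sg, [/\ 0 < s0 * sg * a0, sg * (e1 * a0 + g1) < 0 & sg * (e2 * a0 + g2) < 0].
Proof.
move=> e0p e0K s0E acK aeK bcm bem acn aen nseg h1c h1e h2c h2e hit m1 m2.
have s0n : s0 != 0 by case: s0E => ->; rewrite ?oppr_eq0 oner_eq0.
have s0s : s0 * s0 = 1 by case: s0E => ->; rewrite ?mulrNN mulr1.
have npc : `|s0 * e0 * ac| < m.
  rewrite !normrM (gtr0_norm e0p); case: s0E => ->; rewrite ?normrN normr1 mul1r;
  (apply: le_lt_trans e0K; rewrite ler_pM2l //).
have npe : `|s0 * e0 * ae| < m.
  rewrite !normrM (gtr0_norm e0p); case: s0E => ->; rewrite ?normrN normr1 mul1r;
  (apply: le_lt_trans e0K; rewrite ler_pM2l //).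
have [bc0|bcn] := eqVneq bc 0; have [be0|ben] := eqVneq be 0.
- exfalso; apply: nseg; split => //; split => //.
  have E : (bc - s0 * e0 * ac) * (be - s0 * e0 * ae) = (s0 * s0) * (e0 * e0) * (ac * ae) by rewrite bc0 be0; ring.
  rewrite E s0s mul1r in hit.
  by rewrite -(pmulr_rle0 _ (mulr_gt0 e0p e0p)).
- have Pe := sgnG bem npe ben.
  exists ac, be; split.
  + have : 0 <= (s0 * e0 * ac) * be.
      apply: (H1 Pe); rewrite bc0 sub0r mulNr oppr_le0 in hit; exact: hit.
    rewrite le0r => /orP[/eqP|] h.
      exfalso; move: h; apply/eqP; rewrite !mulf_neq0 //; [exact: lt0r_neq0 e0p|exact: acn].
    have : 0 < e0 * (s0 * be * ac) by rewrite (_ : e0 * (s0 * be * ac) = s0 * e0 * ac * be) //; ring.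
    by rewrite pmulr_rgt0.
  + have Q := sgnG bem h1e ben.
    rewrite bc0 sub0r in m1.
    have := H2 Q m1; by rewrite mulNr oppr_gt0 mulrC.
  + have Q := sgnG bem h2e ben.
    rewrite bc0 sub0r in m2.
    have := H2 Q m2; by rewrite mulNr oppr_gt0 mulrC.
- have Pc := sgnG bcm npc bcn.
  exists ae, bc; split.
  + have : 0 <= (s0 * e0 * ae) * bc.
      apply: (H1 Pc); rewrite be0 sub0r mulrN oppr_le0 mulrC in hit; exact: hit.
    rewrite le0r => /orP[/eqP|] h.
      exfalso; move: h; apply/eqP; rewrite !mulf_neq0 //; [exact: lt0r_neq0 e0p|exact: aen].
    have : 0 < e0 * (s0 * bc * ae) by rewrite (_ : e0 * (s0 * bc * ae) = s0 * e0 * ae * bc) //; ring.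
    by rewrite pmulr_rgt0.
  + have Q := sgnG bcm h1c bcn.
    rewrite be0 sub0r mulrC in m1.
    have := H2 Q m1; by rewrite mulNr oppr_gt0 mulrC.
  + have Q := sgnG bcm h2c bcn.
    rewrite be0 sub0r mulrC in m2.
    have := H2 Q m2; by rewrite mulNr oppr_gt0 mulrC.
- exfalso.
  have Pc := sgnG bcm npc bcn.
  have Pe := sgnG bem npe ben.
  have Qc := sgnG bcm h1c bcn.
  have Qe := sgnG bem h1e ben.
  have PP := mulr_gt0 Pc Pe.
  have QQ := mulr_gt0 Qc Qe.
  have E1 : (bc * (bc - s0 * e0 * ac)) * (be * (be - s0 * e0 * ae)) = (bc * be) * ((bc - s0 * e0 * ac) * (be - s0 * e0 * ae)) by ring.
  have E2 : (bc * (bc - (e1 * ac + g1))) * (be * (be - (e1 * ae + g1))) = (bc * be) * ((bc - (e1 * ac + g1)) * (be - (e1 * ae + g1))) by ring.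
  rewrite E1 in PP; rewrite E2 in QQ.
  have hb : bc * be < 0.
    rewrite ltNge; apply/negP => hb.
    by have := mulr_ge0_le0 hb hit; rewrite leNgt PP.
  by move: QQ; rewrite (nmulr_rgt0 _ hb) ltNge (ltW m1).
Qed.

Lemma sgn_tr1 (x a l : R) : 0 < x * a -> x * l < 0 -> a * l < 0.
Proof.
move=> h1 h2; have := pmulr_rlt0 _ h1; move/(_ (x * l)); rewrite h2 => h.
rewrite ltNge; apply/negP => h3.
have : 0 <= (x * x) * (a * l) by apply: mulr_ge0 => //; rewrite -expr2 sqr_ge0.
by rewrite leNgt (_ : x * x * (a * l) = x * a * (x * l)) ?h //; ring.
Qed.

Lemma sgn_tr2 (x a l : R) : 0 < -1 * x * a -> x * l < 0 -> 0 < a * l.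
Proof.
move=> h1 h2; rewrite mulN1r mulNr oppr_gt0 in h1.
rewrite ltNge; apply/negP => h3.
have h4 : 0 < (x * a) * (x * l) by rewrite nmulr_rgt0.
have : (x * x) * (a * l) <= 0 by apply: mulr_ge0_le0 => //; rewrite -expr2 sqr_ge0.
by rewrite leNgt (_ : x * x * (a * l) = x * a * (x * l)) ?h4 //; ring.
Qed.

Lemma interior B (a b : pt R) (hab : a != b)
  (Hmax : maximal_region (RB B) (segment a b)) (t0 : R) :
  0 < t0 < 1 -> unionB B ((1 - t0) * a.1 + t0 * b.1, (1 - t0) * a.2 + t0 * b.2).
Proof.
move=> /andP[t0p t01].
have uN : (b.1 - a.1, b.2 - a.2) != (0, 0).
  apply: contraNneq hab => -[/eqP h1 /eqP h2].
  move: h1 h2; rewrite !subr_eq0 => /eqP h1 /eqP h2.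
  by rewrite [a]surjective_pairing [b]surjective_pairing h1 h2.
have Nn := dir_nz _ uN; move: Nn => /=.
set p1 := (1 - t0) * a.1 + t0 * b.1; set p2 := (1 - t0) * a.2 + t0 * b.2.
set u1 := b.1 - a.1; set u2 := b.2 - a.2; set N := u1 * u1 + u2 * u2 => Nn.
have N0 : 0 < N by rewrite lt_neqAle eq_sym Nn /N -!expr2 addr_ge0 ?sqr_ge0.
apply: contrapT => pn.
have Sp : segment a b (p1, p2) by exists t0; rewrite !ltW.
have [_ H2] := Hmax; have [r [r0 Er]] := H2 _ Sp.
set T := Num.min (Num.min t0 (1 - t0)) (r / (N + 1)).
have N1 : 0 < N + 1 by apply: addr_gt0.
have T0 : 0 < T by rewrite !lt_min t0p subr_gt0 t01 divr_gt0.
have Chord : forall X, `|X| < T -> RB B (p1 + X * u1, p2 + X * u2).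
  move=> X; rewrite !lt_min => /andP[/andP[h1 h2] h3].
  move: h1 h2; rewrite !ltr_norml => /andP[h1 h1'] /andP[h2 h2'].
  have hS : segment a b (p1 + X * u1, p2 + X * u2).
    exists (t0 + X); split; first by apply/andP; split; lra.
    by congr (_, _); rewrite /p1 /p2 /u1 /u2; ring.
  have hB : eball (p1, p2) r (p1 + X * u1, p2 + X * u2).
    rewrite /eball /=.
    have h4 : `|X| * (N + 1) < r by rewrite -ltr_pdivlMr.
    have h5 : X ^+ 2 = `|X| ^+ 2 by rewrite real_normK ?num_real.
    have h6 := normr_ge0 X.
    have -> : (p1 + X * u1 - p1) ^+ 2 + (p2 + X * u2 - p2) ^+ 2 = X ^+ 2 * N
      by rewrite /N; ring.
    rewrite h5; set y := `|X| in h4 h6 *.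
    have e1 : y * (N + 1) * (y * (N + 1)) < r * r.
      by apply: ltr_pM => //; apply: mulr_ge0 => //; apply: ltW.
    have e2 : y ^+ 2 * N <= y * (N + 1) * (y * (N + 1)).
      rewrite (_ : y * (N + 1) * (y * (N + 1)) = y ^+ 2 * ((N + 1) * (N + 1))); last by ring.
      apply: ler_wpM2l; first exact: sqr_ge0.
      nra.
    by apply: le_lt_trans e2 _; rewrite expr2.
  by have [] : (eball (p1, p2) r `&` RB B) (p1 + X * u1, p2 + X * u2) by rewrite -Er.
have Hoff : forall dl, dl != 0 -> dl * dl * N < r * r ->
    ~ RB B (p1 - dl * u2, p2 + dl * u1).
  move=> dl dn dr hRB.
  have [_ [l [_ E]]] : (eball (p1, p2) r `&` segment a b) (p1 - dl * u2, p2 + dl * u1).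
    rewrite Er; split => //; rewrite /eball /=.
    have -> : (p1 - dl * u2 - p1) ^+ 2 + (p2 + dl * u1 - p2) ^+ 2 = dl * dl * N
      by rewrite /N; ring.
    by rewrite -expr2 in dr.
  case: E => E1 E2.
  have : dl * N = 0.
    have -> : dl * N = u1 * ((p2 + dl * u1) - a.2) - u2 * ((p1 - dl * u2) - a.1).
      by rewrite /N /p1 /p2 /u1 /u2; ring.
    by rewrite E1 E2 /u1 /u2; ring.
  by move/eqP; rewrite mulf_eq0 (negbTE dn) (negbTE Nn).
have pRB : RB B (p1, p2).
  by have := Chord 0; rewrite normr0 !mul0r !addr0; apply.
pose al (x : pt R) := (x.1 - p1) * u1 + (x.2 - p2) * u2.
pose be (x : pt R) := u1 * (x.2 - p2) - u2 * (x.1 - p1).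
have [K [m [K0 m0 Hb]]] := fin_bounds al be B.
have xp : forall x, be x = 0 -> x = (p1 + al x / N * u1, p2 + al x / N * u2).
  case=> x1 x2; rewrite /be /al /= => h.
  have k1 : (x1 - p1) * N = ((x1 - p1) * u1 + (x2 - p2) * u2) * u1.
    apply/eqP; rewrite -subr_eq0; apply/eqP.
    have -> : (x1 - p1) * N - ((x1 - p1) * u1 + (x2 - p2) * u2) * u1 = - u2 * (u1 * (x2 - p2) - u2 * (x1 - p1)) by rewrite /N; ring.
    by rewrite h mulr0.
  have k2 : (x2 - p2) * N = ((x1 - p1) * u1 + (x2 - p2) * u2) * u2.
    apply/eqP; rewrite -subr_eq0; apply/eqP.
    have -> : (x2 - p2) * N - ((x1 - p1) * u1 + (x2 - p2) * u2) * u2 = u1 * (u1 * (x2 - p2) - u2 * (x1 - p1)) by rewrite /N; ring.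
    by rewrite h mulr0.
  by congr (_, _); rewrite mulrAC -?k1 -?k2 mulfK // addrC subrK.
have endp : forall s, s \in B -> forall x, (x = s.1 \/ x = s.2) -> be x = 0 -> al x != 0.
  move=> s sB x hx b0; apply/negP => /eqP a0.
  have xE : x = (p1, p2) by rewrite (xp _ b0) a0 !mul0r !addr0.
  apply: pn; exists s => //; case: hx => hx.
    by exists 0; rewrite lexx ler01 -hx xE; split => //=; congr (_, _); ring.
  by exists 1; rewrite lexx ler01 -hx xE; split => //=; congr (_, _); ring.
have nseg : forall s, s \in B -> ~ (be s.1 = 0 /\ be s.2 = 0 /\ al s.1 * al s.2 <= 0).
  move=> s sB [b1 [b2 h]]; apply: pn; exists s => //.
  apply: (between s.1 s.2 (p1, p2) u1 u2 (al s.1 / N) (al s.2 / N) (xp _ b1) (xp _ b2)).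
  by rewrite mulrACA mulr_le0_ge0 // mulr_ge0 // invr_ge0 ltW.
have K1 : 0 < K + 1 by apply: ltr_wpDl.
set e0 := m / (K + 1).
have e00 : 0 < e0 by rewrite divr_gt0.
have e0K : e0 * K < m.
  rewrite /e0 mulrAC ltr_pdivrMr //; nra.
have hits : forall s0, s0 = 1 \/ s0 = -1 -> exists2 s, s \in B &
    (be s.1 - s0 * e0 * al s.1) * (be s.2 - s0 * e0 * al s.2) <= 0.
  move=> s0 s0E.
  set d := (u1 - s0 * e0 * u2, u2 + s0 * e0 * u1).
  have dn : d != (0, 0).
    apply/negP => /eqP dE.
    have : d.1 * u1 + d.2 * u2 = N by rewrite /d /N /=; ring.
    by rewrite dE /= !mul0r addr0 => /esym /eqP; rewrite (negbTE Nn).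
  have [s sB h] := meets_hit _ _ _ (pRB d dn).
  exists s => //.
  have E : forall x, gl d (p1, p2) x = be x - s0 * e0 * al x.
    by move=> x; rewrite /gl /be /al /d /=; ring.
  by rewrite !E in h.
set dd := Num.min (r / (N + 1)) (m / (K / T + N + 1)).
have KT : 0 <= K / T by rewrite divr_ge0 // ltW.
have D1 : 0 < K / T + N + 1 by apply: ltr_wpDl => //; apply: addr_ge0 => //; apply: ltW.
have d00 : 0 < dd by rewrite lt_min !divr_gt0.
have d0r : dd * dd * N < r * r.
  have h : dd * (N + 1) <= r by rewrite -ler_pdivlMr // ge_min lexx.
  have e1 : dd * (N + 1) * (dd * (N + 1)) <= r * r.
    by apply: ler_pM => //; apply: mulr_ge0; apply: ltW.
  have e2 : dd * dd * N < dd * (N + 1) * (dd * (N + 1)).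
    rewrite (_ : dd * (N + 1) * (dd * (N + 1)) = dd * dd * ((N + 1) * (N + 1))); last by ring.
    rewrite ltr_pM2l ?mulr_gt0 //; nra.
  exact: lt_le_trans e2 e1.
have d0m : dd * (K / T + N) < m.
  have h : dd * (K / T + N + 1) <= m by rewrite -ler_pdivlMr // ge_min lexx orbT.
  have : dd * (K / T + N) + dd = dd * (K / T + N + 1) by ring.
  lra.
have misses : forall sg, sg = 1 \/ sg = -1 -> exists ep, forall s, s \in B ->
    [/\ `|ep * al s.1 + sg * dd * N| < m, `|ep * al s.2 + sg * dd * N| < m &
     0 < (be s.1 - (ep * al s.1 + sg * dd * N)) * (be s.2 - (ep * al s.2 + sg * dd * N))].
  move=> sg sgE.
  set dl := sg * dd.
  have adl : `|dl| = dd by rewrite /dl; case: sgE => ->; rewrite ?mulN1r ?mul1r ?normrN gtr0_norm.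
  have dln : dl != 0 by rewrite -normr_eq0 adl gt_eqF.
  have dlr : dl * dl * N < r * r.
    have : dl * dl = dd * dd by rewrite /dl; case: sgE => ->; ring.
    by move=> ->.
  have := Hoff dl dln dlr.
  set q := (p1 - dl * u2, p2 + dl * u1).
  move/existsNP => [d] /not_implyP [dn nm].
  have miss : forall s, s \in B -> 0 < gl d q s.1 * gl d q s.2.
    move=> s sB; rewrite ltNge; apply/negP => h; apply: nm; exact: hit_meets _ _ _ _ dn sB h.
  set ka := d.1 * u1 + d.2 * u2; set mu := u1 * d.2 - u2 * d.1.
  have bnd : `|mu| * T <= dd * `|ka|.
    rewrite leNgt; apply/negP => hlt.
    have mun : mu != 0.
      apply/eqP => m0'; move: hlt; rewrite m0' normr0 mul0r ltNge => /negP; apply; apply: mulr_ge0 => //; exact: ltW.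
    set X := - dl * ka / mu.
    have hX : `|X| < T.
      rewrite /X normf_div normrM normrN adl ltr_pdivrMr ?normr_gt0 //.
      by rewrite [T * _]mulrC.
    have [s sB h] := meets_hit _ _ _ (Chord X hX d dn).
    have E : forall x, gl d (p1 + X * u1, p2 + X * u2) x = gl d q x.
      move=> x; rewrite (gl_shift _ _ q) (_ : gl d (p1 + X * u1, p2 + X * u2) q = 0) ?addr0 //.
      rewrite /gl /q /X /ka /mu /=; field; exact: mun.
    by have := miss s sB; rewrite -!E ltNge h.
  have kan : ka != 0.
    apply/eqP => k0; move: bnd; rewrite k0 normr0 mulr0 => bnd.
    have mu0 : mu = 0.
      apply/eqP; rewrite -normr_eq0 eq_le normr_ge0 andbT -(pmulr_lle0 _ T0); exact: bnd.
    have h1 : N * d.1 = u1 * ka - u2 * mu by rewrite /N /ka /mu; ring.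
    have h2 : N * d.2 = u2 * ka + u1 * mu by rewrite /N /ka /mu; ring.
    rewrite k0 mu0 !mulr0 subr0 in h1; rewrite k0 mu0 !mulr0 addr0 in h2.
    move/eqP: h1; rewrite mulf_eq0 (negbTE Nn) /= => /eqP d1.
    move/eqP: h2; rewrite mulf_eq0 (negbTE Nn) /= => /eqP d2.
    by move: dn; rewrite [d]surjective_pairing d1 d2 eqxx.
  set ep := mu / ka; exists ep.
  have iden : forall x, N * gl d q x = ka * (be x - (ep * al x + dl * N)).
    move=> x; rewrite /gl /q /be /al /ep /ka /mu /N /=; field; exact: kan.
  have epT : `|ep| * T <= dd.
    by rewrite /ep normf_div mulrAC ler_pdivrMr ?normr_gt0.
  have near : forall x, `|al x| <= K -> `|ep * al x + dl * N| < m.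
    move=> x hx.
    have w1 : `|ep| <= dd / T by rewrite ler_pdivlMr.
    have w2 : `|ep * al x| <= dd / T * K.
      by rewrite normrM; apply: ler_pM => //; apply: normr_ge0.
    have w3 : `|dl * N| = dd * N by rewrite normrM adl gtr0_norm.
    have w0 := ler_normD (ep * al x) (dl * N).
    have w4 : dd / T * K = dd * (K / T) by rewrite [K / T]mulrC mulrA.
    have w5 : dd * (K / T + N) = dd * (K / T) + dd * N by rewrite mulrDr.
    lra.
  move=> s sB; have [k1 k2 _ _] := Hb s sB.
  split; [exact: near|exact: near|].
  have := miss s sB => hm.
  have : 0 < (N * gl d q s.1) * (N * gl d q s.2) by rewrite mulrACA mulr_gt0 // mulr_gt0.
  by rewrite !iden mulrACA pmulr_rgt0 // sq_pos.
have [s1 s1B hh1] := hits 1 (or_introl erefl).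
have [s2 s2B hh2] := hits (-1) (or_intror erefl).
have [ep1 M1] := misses 1 (or_introl erefl).
have [ep2 M2] := misses (-1) (or_intror erefl).
have [k11 k12 k13 k14] := Hb s1 s1B.
have [n11 n12 m11] := M1 s1 s1B; have [n21 n22 m21] := M2 s1 s1B.
have [a1 [sg1 [c1 c2 c3]]] := seg_class K m e0 1 ep1 (1 * dd * N) ep2 (-1 * dd * N)
  (al s1.1) (be s1.1) (al s1.2) (be s1.2) e00 e0K (or_introl erefl) k11 k12 k13 k14
  (endp s1 s1B s1.1 (or_introl erefl)) (endp s1 s1B s1.2 (or_intror erefl))
  (nseg s1 s1B) n11 n12 n21 n22 hh1 m11 m21.
have [k21 k22 k23 k24] := Hb s2 s2B.
have [o11 o12 m12] := M1 s2 s2B; have [o21 o22 m22] := M2 s2 s2B.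
have [a2 [sg2 [f1 f2 f3]]] := seg_class K m e0 (-1) ep1 (1 * dd * N) ep2 (-1 * dd * N)
  (al s2.1) (be s2.1) (al s2.2) (be s2.2) e00 e0K (or_intror erefl) k21 k22 k23 k24
  (endp s2 s2B s2.1 (or_introl erefl)) (endp s2 s2B s2.2 (or_intror erefl))
  (nseg s2 s2B) o11 o12 o21 o22 hh2 m12 m22.
rewrite mul1r in c1.
apply: (final_contra a1 a2 ep1 (1 * dd * N) ep2 (-1 * dd * N)).
- by rewrite mul1r mulr_gt0.
- by rewrite mulN1r mulNr oppr_lt0 mulr_gt0.
- exact: sgn_tr1 c1 c2.
- exact: sgn_tr2 f1 f2.
- exact: sgn_tr1 c1 c3.
- exact: sgn_tr2 f1 f3.
Qed.

End Geo.

Theorem lemma1 (R : realType) (B : seq (pt R * pt R))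
  (HB : forall s, s \in B -> s.1 != s.2)
  (a b : pt R) (hab : a != b)
  (Hmax : maximal_region (RB B) (segment a b)) :
  segment a b `<=` unionB B.
Proof.
have int := interior R B a b hab Hmax.
move=> x [t [/andP[t0 t1] ->]].
have [->|tn0] := eqVneq t 0.
  have -> : ((1 - 0) * a.1 + 0 * b.1, (1 - 0) * a.2 + 0 * b.2) = a.
    by rewrite subr0 !mul1r !mul0r !addr0 -surjective_pairing.
  apply: (closed_lim R _ a (b.1 - a.1, b.2 - a.2) (unionB_closed R B)) => s /andP[s0 s1] /=.
  suff -> : (a.1 + s * (b.1 - a.1), a.2 + s * (b.2 - a.2)) =
    ((1 - s) * a.1 + s * b.1, (1 - s) * a.2 + s * b.2) by apply: int; rewrite s0 s1.
  by congr (_, _); ring.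
have [->|tn1] := eqVneq t 1.
  have -> : ((1 - 1) * a.1 + 1 * b.1, (1 - 1) * a.2 + 1 * b.2) = b.
    by rewrite subrr !mul1r !mul0r !add0r -surjective_pairing.
  apply: (closed_lim R _ b (a.1 - b.1, a.2 - b.2) (unionB_closed R B)) => s /andP[s0 s1] /=.
  suff -> : (b.1 + s * (a.1 - b.1), b.2 + s * (a.2 - b.2)) =
    ((1 - (1 - s)) * a.1 + (1 - s) * b.1, (1 - (1 - s)) * a.2 + (1 - s) * b.2).
    by apply: int; rewrite subr_gt0 s1 ltrBlDl ltrDr s0.
  by congr (_, _); ring.
by apply: int; rewrite !lt_neqAle eq_sym tn0 t0 tn1 t1.
Qed.
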